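(* If $C\subseteq\mathbb{R}$ is infinite and $|\mathbb{R}\setminus C|=\mathfrak{c}$, then there is a two-point selection $f$ on $\mathbb{R}$ such that $C$ is neither open nor closed in the topology $\tau_f$.
   Context: $\mathfrak{c}=|\mathbb{R}|$. A two-point selection on $\mathbb{R}$ is a function $f$ from the set of two-element subsets of $\mathbb{R}$ to $\mathbb{R}$ with $f(F)\in F$. Write $r<_f s$ if $f(\{r,s\})=r$ ($r\ne s$), $(\leftarrow,r)_f=\{x: x<_f r\}$, $(r,\rightarrow)_f=\{x: r<_f x\}$. The topology $\tau_f$ on $\mathbb{R}$ is generated (as a subbase) by all sets $(\leftarrow,r)_f$, $(r,\rightarrow)_f$, $r\in\mathbb{R}$. *)

(* Defs.v *)
From Stdlib Require Import Reals.
Open Scope R_scope.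

(* A two-point selection on R: a function on two-element subsets {r,s}
   (r <> s), represented as a symmetric binary function on pairs of
   distinct reals choosing one of its two arguments. Values on the
   diagonal are irrelevant. *)
Definition two_point_selection (f : R -> R -> R) : Prop :=
  forall r s, r <> s -> f r s = f s r /\ (f r s = r \/ f r s = s).

Definition sel_lt (f : R -> R -> R) (r s : R) : Prop := r <> s /\ f r s = r.

Definition sel_left_ray (f : R -> R -> R) (r : R) : R -> Prop :=
  fun x => sel_lt f x r.
Definition sel_right_ray (f : R -> R -> R) (r : R) : R -> Prop :=
  fun x => sel_lt f r x.

Definition subbase_f (f : R -> R -> R) (U : R -> Prop) : Prop :=
  exists r, (forall x, U x <-> sel_left_ray f r x) \/
            (forall x, U x <-> sel_right_ray f r x).

Inductive generated_open (S : (R -> Prop) -> Prop) : (R -> Prop) -> Prop :=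
  | go_sub : forall U, S U -> generated_open S U
  | go_full : generated_open S (fun _ => True)
  | go_inter : forall U V, generated_open S U -> generated_open S V ->
      generated_open S (fun x => U x /\ V x)
  | go_union : forall (F : (R -> Prop) -> Prop),
      (forall U, F U -> generated_open S U) ->
      generated_open S (fun x => exists U, F U /\ U x)
  | go_ext : forall U V, generated_open S U -> (forall x, U x <-> V x) ->
      generated_open S V.

Definition tau_open (f : R -> R -> R) (U : R -> Prop) : Prop :=
  generated_open (subbase_f f) U.

Definition tau_closed (f : R -> R -> R) (U : R -> Prop) : Prop :=
  tau_open f (fun x => ~ U x).

Definition infinite_set (C : R -> Prop) : Prop :=
  exists g : nat -> R, (forall n, C (g n)) /\ (forall n m, g n = g m -> n = m).

Definition has_card_continuum (A : R -> Prop) : Prop :=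
  exists g : R -> R, (forall x, A (g x)) /\
    (forall x y, g x = g y -> x = y) /\ (forall a, A a -> exists x, g x = a).

(* Main.v *)
Require Import Defs.
From Stdlib Require Import Reals Lra Lia Classical ClassicalEpsilon.
Open Scope R_scope.

Definition fsel (phi : R -> R) (r s : R) : R :=
  if Rlt_dec (phi r) (phi s) then r
  else if Rlt_dec (phi s) (phi r) then s
  else if Rlt_dec r s then r else s.

Definition llt (phi : R -> R) x y := phi x < phi y \/ (phi x = phi y /\ x < y).

Lemma fsel_tps phi : two_point_selection (fsel phi).
Proof.
  intros r s Hrs; unfold fsel.
  destruct (Rlt_dec (phi r) (phi s)); destruct (Rlt_dec (phi s) (phi r));
  try lra; try (split; auto; fail);
  destruct (Rlt_dec r s); destruct (Rlt_dec s r); try lra; auto;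
  destruct (Rtotal_order r s) as [?|[?|?]]; lra.
Qed.

Lemma sel_lt_iff phi x y : sel_lt (fsel phi) x y <-> llt phi x y.
Proof.
  unfold sel_lt, llt, fsel; split.
  - intros [Hne Hf].
    destruct (Rlt_dec (phi x) (phi y)); [lra|].
    destruct (Rlt_dec (phi y) (phi x)); [congruence|].
    destruct (Rlt_dec x y); [right; lra| congruence].
  - intros [H|[H1 H2]].
    + split; [intro E; subst; lra|].
      destruct (Rlt_dec (phi x) (phi y)); [auto|lra].
    + split; [lra|].
      destruct (Rlt_dec (phi x) (phi y)); [auto|].
      destruct (Rlt_dec (phi y) (phi x)); [lra|].
      destruct (Rlt_dec x y); [auto|lra].
Qed.

Lemma inv_open (f : R -> R -> R) (p : R) (q : nat -> R) :
  (forall r, sel_lt f p r -> exists N, forall n, (N <= n)%nat -> sel_lt f (q n) r) ->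
  (forall r, sel_lt f r p -> exists N, forall n, (N <= n)%nat -> sel_lt f r (q n)) ->
  forall U, tau_open f U -> U p -> exists N, forall n, (N <= n)%nat -> U (q n).
Proof.
  intros H1 H2 U HU. unfold tau_open in HU.
  induction HU as [U HS| |U V _ IHU _ IHV|F _ IH|U V _ IH Hext].
  - intros Up. destruct HS as [r [Hl|Hr]].
    + apply Hl in Up. destruct (H1 r Up) as [N HN].
      exists N; intros n Hn; apply Hl; apply HN; auto.
    + apply Hr in Up. destruct (H2 r Up) as [N HN].
      exists N; intros n Hn; apply Hr; apply HN; auto.
  - intros _; exists O; auto.
  - intros [Up Vp]. destruct (IHU Up) as [N1 HN1]. destruct (IHV Vp) as [N2 HN2].
    exists (Nat.max N1 N2); intros n Hn; split; [apply HN1|apply HN2]; lia.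
  - intros [V [FV Vp]]. destruct (IH V FV Vp) as [N HN].
    exists N; intros n Hn; exists V; auto.
  - intros Vp. apply Hext in Vp. destruct (IH Vp) as [N HN].
    exists N; intros n Hn; apply Hext; auto.
Qed.

Lemma conv phi p q a :
  phi p = a -> (forall r, phi r = a -> r = p) ->
  (forall n, phi (q n) = a + / (INR n + 2)) ->
  (forall r, sel_lt (fsel phi) p r -> exists N, forall n, (N <= n)%nat -> sel_lt (fsel phi) (q n) r) /\
  (forall r, sel_lt (fsel phi) r p -> exists N, forall n, (N <= n)%nat -> sel_lt (fsel phi) r (q n)).
Proof.
  intros Hp Ha Hq; split; intros r Hr; apply sel_lt_iff in Hr.
  - assert (Hlt : a < phi r).
    { destruct Hr as [H|[H1 H2]]; [lra|]. rewrite (Ha r) in H2; lra. }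
    destruct (archimed_cor1 (phi r - a)) as [N [HN HN0]]; [lra|].
    exists N; intros n Hn. apply sel_lt_iff; left. rewrite Hq.
    assert (INR N <= INR n) by (apply le_INR; auto).
    assert (0 < INR N) by (apply lt_0_INR; auto).
    assert (/ (INR n + 2) < / INR N).
    { apply Rinv_lt_contravar; [apply Rmult_lt_0_compat|]; lra. }
    lra.
  - assert (Hlt : phi r < a).
    { destruct Hr as [H|[H1 H2]]; [lra|]. rewrite (Ha r) in H2; lra. }
    exists O; intros n _. apply sel_lt_iff; left. rewrite Hq.
    assert (0 < / (INR n + 2)).
    { apply Rinv_0_lt_compat. pose proof (pos_INR n); lra. }
    lra.
Qed.

Definition phi0 (g : nat -> R) (h : R -> R) (x : R) : R :=
  if Req_EM_T x (g O) then 0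
  else if Req_EM_T x (h 0) then 3
  else if excluded_middle_informative (exists n, x = h (INR (S n))) then
    / (INR (epsilon (inhabits O) (fun n => x = h (INR (S n)))) + 2)
  else if excluded_middle_informative (exists n, x = g (S n)) then
    3 + / (INR (epsilon (inhabits O) (fun n => x = g (S n))) + 2)
  else 10.

Section Main.
Variables (C : R -> Prop) (g : nat -> R) (h : R -> R).
Hypotheses (gC : forall n, C (g n)) (ginj : forall n m, g n = g m -> n = m)
  (hC : forall x, ~ C (h x)) (hinj : forall x y, h x = h y -> x = y).

Lemma gh n y : g n <> h y.
Proof. intro E. apply (hC y). rewrite <- E. auto. Qed.

Lemma INRS_ne0 n : INR (S n) <> 0.
Proof. pose proof (pos_INR n); rewrite S_INR; lra. Qed.

Lemma phi_s n : phi0 g h (h (INR (S n))) = 0 + / (INR n + 2).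
Proof.
  unfold phi0.
  destruct (Req_EM_T (h (INR (S n))) (g O)) as [E|_]; [exfalso; apply (gh O (INR (S n))); auto|].
  destruct (Req_EM_T (h (INR (S n))) (h 0)) as [E|_]; [apply hinj, INRS_ne0 in E; contradiction|].
  destruct excluded_middle_informative as [Ex|Nx]; [|exfalso; apply Nx; eauto].
  pose proof (epsilon_spec (inhabits O) (fun m => h (INR (S n)) = h (INR (S m))) Ex) as Hs.
  cbv beta in Hs. apply hinj, INR_eq in Hs.
  set (e := epsilon _ _) in *. assert (e = n) as -> by congruence. lra.
Qed.

Lemma phi_t n : phi0 g h (g (S n)) = 3 + / (INR n + 2).
Proof.
  unfold phi0.
  destruct (Req_EM_T (g (S n)) (g O)) as [E|_]; [apply ginj in E; discriminate|].
  destruct (Req_EM_T (g (S n)) (h 0)) as [E|_]; [exfalso; apply (gh (S n) 0); auto|].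
  destruct excluded_middle_informative as [[m Em]|_]; [exfalso; apply (gh (S n) _ Em)|].
  destruct excluded_middle_informative as [Ex|Nx]; [|exfalso; apply Nx; eauto].
  pose proof (epsilon_spec (inhabits O) (fun m => g (S n) = g (S m)) Ex) as Hs.
  cbv beta in Hs. apply ginj in Hs.
  set (e := epsilon _ _) in *. assert (e = n) as -> by congruence. reflexivity.
Qed.

Lemma inv_pos (n : nat) : 0 < / (INR n + 2) <= / 2.
Proof.
  pose proof (pos_INR n). split.
  - apply Rinv_0_lt_compat; lra.
  - apply Rinv_le_contravar; lra.
Qed.

Lemma phi_c : phi0 g h (g O) = 0.
Proof. unfold phi0. destruct (Req_EM_T (g O) (g O)); [auto|congruence]. Qed.

Lemma phi_d : phi0 g h (h 0) = 3.
Proof.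
  unfold phi0. destruct (Req_EM_T (h 0) (g O)) as [E|_]; [exfalso; apply (gh O 0); auto|].
  destruct (Req_EM_T (h 0) (h 0)); [auto|congruence].
Qed.

Lemma phi_cases x :
  (x = g O /\ phi0 g h x = 0) \/ (x = h 0 /\ phi0 g h x = 3) \/
  (0 < phi0 g h x <= /2) \/ (3 < phi0 g h x <= 3 + /2) \/ phi0 g h x = 10.
Proof.
  unfold phi0.
  destruct (Req_EM_T x (g O)); [left; auto|].
  destruct (Req_EM_T x (h 0)); [right; left; auto|].
  destruct excluded_middle_informative; [right; right; left; apply inv_pos|].
  destruct excluded_middle_informative; [|right; right; right; right; auto].
  right; right; right; left.
  match goal with |- context [INR ?k] => pose proof (inv_pos k) end. lra.
Qed.

Lemma phi_0 r : phi0 g h r = 0 -> r = g O.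
Proof. intro E. pose proof (Rinv_0_lt_compat 2 ltac:(lra)).
  destruct (phi_cases r) as [[? ?]|[[? ?]|[?|[?|?]]]]; auto; lra. Qed.

Lemma phi_3 r : phi0 g h r = 3 -> r = h 0.
Proof. intro E. pose proof (Rinv_0_lt_compat 2 ltac:(lra)).
  assert (/2 < 1) by (apply (Rmult_lt_reg_l 2); [lra|]; rewrite Rinv_r; lra).
  destruct (phi_cases r) as [[? ?]|[[? ?]|[?|[?|?]]]]; auto; lra. Qed.

End Main.

Theorem theorem3p15 (C : R -> Prop) :
  infinite_set C ->
  has_card_continuum (fun x => ~ C x) ->
  exists f : R -> R -> R, two_point_selection f /\
    ~ tau_open f C /\ ~ tau_closed f C.
Proof.
  intros [g [gC ginj]] [h [hC [hinj _]]].
  exists (fsel (phi0 g h)). split; [apply fsel_tps|split].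
  - intro HO.
    destruct (conv (phi0 g h) (g O) (fun n => h (INR (S n))) 0
      ltac:(eapply phi_c; eauto) ltac:(eapply phi_0; eauto) ltac:(intro; eapply phi_s; eauto)) as [A B].
    destruct (inv_open _ _ _ A B C HO (gC O)) as [N HN].
    apply (hC (INR (S N))), HN; auto.
  - intro HO.
    destruct (conv (phi0 g h) (h 0) (fun n => g (S n)) 3
      ltac:(eapply phi_d; eauto) ltac:(eapply phi_3; eauto) ltac:(intro; eapply phi_t; eauto)) as [A B].
    destruct (inv_open _ _ _ A B _ HO (hC 0)) as [N HN].
    apply (HN N); auto.
Qed.
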